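(* Let $\Lambda=(V,\pi,v,\le)$ be a bi-colored weighted ordered vertex with $r(\Lambda)=2$ and $|V_\bullet|=1$, identify $V=\{1,\dots,l\}$ via $\le$, and suppose $s(\Lambda)\ne0$. Then: if $\pi(1)=\circ$, $\pi(2)=\bullet$ and $\pi(i)=\circ$ for all $i\ge3$, then $s(\Lambda)=(-1)^l$; if $\pi(1)=\bullet$ and $\pi(i)=\circ$ for all $i\ge2$, then $s(\Lambda)=(-1)^{l-1}$.
   Context: A bi-colored weighted ordered vertex is $\Lambda=(V,\pi,v,\le)$ with $V$ a finite set, $\pi\colon V\to\{\bullet,\circ\}$, $v\colon V\to\mathbb{Z}_{\ge1}$, $\le$ a total order on $V$. Put $V_\bullet=\pi^{-1}(\bullet)$, $V_\circ=\pi^{-1}(\circ)$, $r(\Lambda)=\sum_{i\in V_\bullet}v(i)$; $v_i=(v(i),0)$ if $i\in V_\bullet$, $v_i=(0,v(i))$ if $i\in V_\circ$. For $(r,n)\in\mathbb{Z}_{\ge0}^2\setminus\{0\}$ let $\mu(r,n)=n/r\in\mathbb{Q}\cup\{\infty\}$ ($\infty$ if $r=0$). For vectors $w_1,\dots,w_l$ define $s_l(w_1,\dots,w_l)=(-1)^k$ if for each $i=1,\dots,l-1$ either (a) $\mu(w_i)>\mu(w_{i+1})$ and $\mu(w_1+\dots+w_i)\ge\mu(w_{i+1}+\dots+w_l)$, or (b) $\mu(w_i)\le\mu(w_{i+1})$ and $\mu(w_1+\dots+w_i)<\mu(w_{i+1}+\dots+w_l)$, where $k$ is the number of $i$ satisfying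 (b); otherwise $s_l=0$. Set $s(\Lambda)=s_l(v_1,\dots,v_l)$, $l=|V|$. *)

(* Defs.v *)
From mathcomp Require Import all_boot all_order all_algebra.
Set Implicit Arguments. Unset Strict Implicit. Unset Printing Implicit Defensive.
Import Order.TTheory GRing.Theory Num.Theory.

Inductive color := Black | White.  (* Black = \bullet, White = \circ *)

Definition is_black (c : color) : bool := if c is Black then true else false.

(* slope mu(r,n) = n/r, with None standing for +infinity (r = 0) *)
Definition mu (w : nat * nat) : option rat :=
  if w.1 == 0%N then None else Some ((w.2)%:R / (w.1)%:R)%R.

Definition mu_le (a b : option rat) : bool :=
  match a, b with
  | _, None => true
  | None, Some _ => false
  | Some x, Some y => (x <= y)%R
  end.
Definition mu_lt (a b : option rat) : bool := ~~ mu_le b a.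

Definition vsum (s : seq (nat * nat)) : nat * nat :=
  (\sum_(x <- s) x.1, \sum_(x <- s) x.2)%N.

(* for split index i (1 <= i <= l-1): w_i = nth (i-1), w_{i+1} = nth i *)
Definition cond_a (w : seq (nat * nat)) (i : nat) : bool :=
  mu_lt (mu (nth (0,0) w i)) (mu (nth (0,0) w i.-1)) &&
  mu_le (mu (vsum (drop i w))) (mu (vsum (take i w))).
Definition cond_b (w : seq (nat * nat)) (i : nat) : bool :=
  mu_le (mu (nth (0,0) w i.-1)) (mu (nth (0,0) w i)) &&
  mu_lt (mu (vsum (take i w))) (mu (vsum (drop i w))).

Definition s_l (w : seq (nat * nat)) : int :=
  let idx := iota 1 (size w).-1 in
  if all (fun i => cond_a w i || cond_b w i) idx
  then ((-1) ^+ count (cond_b w) idx)%R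
  else 0%R.

(* bi-colored weighted ordered vertex with V = {0,...,l-1} ordered as nat *)
Definition vec (l : nat) (pi : 'I_l -> color) (v : 'I_l -> nat) (i : 'I_l)
  : nat * nat :=
  if is_black (pi i) then (v i, 0%N) else (0%N, v i).

Definition sLam (l : nat) (pi : 'I_l -> color) (v : 'I_l -> nat) : int :=
  s_l [seq vec pi v i | i <- enum 'I_l].

Definition rLam (l : nat) (pi : 'I_l -> color) (v : 'I_l -> nat) : nat :=
  (\sum_(i < l | is_black (pi i)) v i)%N.

(* Main.v *)
Require Import Defs.
From mathcomp Require Import all_boot all_order all_algebra.
Import Order.TTheory GRing.Theory Num.Theory.

Lemma mu_None {w : nat * nat} : w.1 = 0%N -> mu w = None.
Proof. by rewrite /mu => ->. Qed.

Lemma mu_Some {w : nat * nat} : (0 < w.1)%N -> exists q, mu w = Some q.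
Proof. by rewrite /mu => H; rewrite (gtn_eqF H); eexists. Qed.

Lemma mu_le_None a : mu_le a None = true.
Proof. by case: a. Qed.

Lemma vsum1_cons a s : (vsum (a :: s)).1 = (a.1 + (vsum s).1)%N.
Proof. by rewrite /vsum /= big_cons. Qed.

Lemma vsum1_0 s : all (fun y : nat * nat => y.1 == 0%N) s -> (vsum s).1 = 0%N.
Proof.
elim: s => [|a s IH]; first by rewrite /vsum big_nil.
rewrite vsum1_cons => /andP [/eqP Ha Hs]; by rewrite Ha IH.
Qed.

Lemma condb_suff w i : (nth (0,0) w i).1 = 0%N -> (0 < (vsum (take i w)).1)%N ->
  (vsum (drop i w)).1 = 0%N -> cond_b w i.
Proof.
move=> H1 H2 H3; rewrite /cond_b (mu_None H1) (mu_None H3) mu_le_None /=.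
by have [q ->] := mu_Some H2.
Qed.

Lemma caseA x t : (0 < x.1)%N -> all (fun y : nat * nat => y.1 == 0%N) t ->
  s_l (x :: t) = ((-1) ^+ size t)%R.
Proof.
move=> Hx Ht.
have HB : forall i, i \in iota 1 (size (x :: t)).-1 -> cond_b (x :: t) i.
  move=> i; rewrite mem_iota /= add1n => /andP [Hi1 Hi2].
  case: i Hi1 Hi2 => [//|i] _ Hi.
  apply: condb_suff.
  - by apply/eqP; rewrite /=; apply: (allP Ht); apply: mem_nth.
  - by rewrite [take _ _]/= vsum1_cons; apply: ltn_addr.
  - by rewrite [drop _ _]/= vsum1_0 //; apply/allP => y /mem_drop Hy; apply: (allP Ht).
rewrite /s_l.
have -> : all (fun i => cond_a (x :: t) i || cond_b (x :: t) i) (iota 1 (size (x :: t)).-1).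
  by apply/allP => i Hi; rewrite HB ?orbT.
rewrite (eq_in_count (a2 := predT) HB) count_predT size_iota //.
Qed.

Lemma caseB y x t : y.1 = 0%N -> (0 < x.1)%N -> all (fun y : nat * nat => y.1 == 0%N) t ->
  s_l (y :: x :: t) = ((-1) ^+ size t)%R.
Proof.
move=> Hy Hx Ht.
have HB : forall i, i \in iota 2 (size t) -> cond_b (y :: x :: t) i.
  move=> i; rewrite mem_iota => /andP [Hi1 Hi2].
  case: i Hi1 Hi2 => [//|[//|i]] _ Hi.
  apply: condb_suff.
  - by apply/eqP; rewrite /=; apply: (allP Ht); apply: mem_nth; by rewrite add2n !ltnS in Hi.
  - by rewrite [take _ _]/= !vsum1_cons Hy add0n; apply: ltn_addr.
  - by rewrite [drop _ _]/= vsum1_0 //; apply/allP => z /mem_drop Hz; apply: (allP Ht).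
have HA1 : cond_a (y :: x :: t) 1.
  rewrite /cond_a /= (mu_None Hy).
  have [q ->] := mu_Some Hx.

  by rewrite (mu_None (w := vsum [:: y])) ?mu_le_None // vsum1_cons Hy vsum1_0.
have HB1 : cond_b (y :: x :: t) 1 = false.
  rewrite /cond_b /= (mu_None Hy).
  by have [q ->] := mu_Some Hx.
rewrite /s_l /=.

rewrite /= HA1 /=.
have -> : all (fun i => cond_a (y :: x :: t) i || cond_b (y :: x :: t) i) (iota 2 (size t)).
  by apply/allP => i Hi; rewrite HB ?orbT.
rewrite HB1 add0n (eq_in_count (a2 := predT) HB) count_predT size_iota //.
Qed.

Theorem lemma4p9 (l : nat) (pi : 'I_l -> color) (v : 'I_l -> nat)
  (hv : forall i, (1 <= v i)%N)
  (hr : rLam pi v = 2%N)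
  (hb : #|[pred i | is_black (pi i)]| = 1%N)
  (hs : sLam pi v <> 0%R) :
  ((forall i : 'I_l, pi i = if val i == 1%N then Black else White) ->
     sLam pi v = ((-1) ^+ l)%R) /\
  ((forall i : 'I_l, pi i = if val i == 0%N then Black else White) ->
     sLam pi v = ((-1) ^+ l.-1)%R).
Proof.
split=> Hpi.
- case: l pi v hv hr hb hs Hpi => [|[|l]] pi v hv hr hb hs Hpi.
  + by move: hb; rewrite (eq_card (B := pred0)) ?card0 // => -[].
  + move: hb; rewrite (eq_card (B := pred0)) ?card0 // => i.
    by rewrite !inE Hpi; case: i => [[|]].
  rewrite /sLam enum_ordSl /= -map_comp enum_ordSl /= -map_comp.
  rewrite caseB.
  + by rewrite size_map size_enum_ord !exprS mulrA mulrNN mul1r.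
  + by rewrite /vec Hpi.
  + by rewrite /vec Hpi /=; apply: hv.
  + apply/allP => z /mapP [j _ ->]; by rewrite /= /vec Hpi.
- case: l pi v hv hr hb hs Hpi => [|l] pi v hv hr hb hs Hpi.
  + by move: hb; rewrite (eq_card (B := pred0)) ?card0 // => -[].
  rewrite /sLam enum_ordSl /= -map_comp caseA.
  + by rewrite size_map size_enum_ord.
  + by rewrite /vec Hpi /=; apply: hv.
  + apply/allP => z /mapP [j _ ->]; by rewrite /= /vec Hpi.
Qed.
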